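(* Let $d$ be a metric on $\mathbb R^n$ induced by a norm, $\delta>0$, and let $\tilde w:\mathcal D^n(\delta)\to\mathcal D^n(\delta)$ be the $\delta$-roundoff of a contraction $w:\mathbb R^n\to\mathbb R^n$ on $(\mathbb R^n,d)$ with contractivity factor $\lambda\in[0,1)$ and fixed point $x_f$. Let $r_0=\theta(1-\lambda)^{-1}$ and $$\Lambda(x_f,r_0)=\{\tilde y\in\mathcal D^n(\delta):d(\tilde y,x_f)\le\theta(1-\lambda)^{-1}\}.$$ Then $\Lambda(x_f,r_0)$ is an absorbing set for $\tilde w$ in $\mathcal D^n(\delta)$, and $\tilde w(\Lambda(x_f,r_0))\subset\Lambda(x_f,r_0)$.
   Context: For $m\in\mathbb Z^n$, $C_\delta(m)=\prod_{j=1}^n[(m_j-\tfrac12)\delta,(m_j+\tfrac12)\delta)$; $\mathcal D^n(\delta)=\{\delta m:m\in\mathbb Z^n\}\subset\mathbb R^n$. The $\delta$-roundoff of $x\in\mathbb R^n$ is $\tilde x=\delta m$ where $x\in C_\delta(m)$; the $\delta$-roundoff of $w$ is $\tilde w(\tilde x)=\widetilde{w(\tilde x)}$. $\theta:=\tfrac12\operatorname{diam}_d(C_\delta(0))$. A set $\Lambda\subset\mathcal D^n(\delta)$ is an absorbing set for $\tilde w$ (in $\mathcal D^n(\delta)$) if for every $\tilde x\in\mathcal D^n(\delta)$ there is $N$ with $\tilde w^{\circ i}(\tilde x)\in\Lambda$ for all $i\ge N$. *)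

(* Defs.v *)
From mathcomp Require Import all_boot all_order all_algebra.
From mathcomp Require Import all_classical all_reals.
Set Implicit Arguments. Unset Strict Implicit. Unset Printing Implicit Defensive.
Import Order.TTheory GRing.Theory Num.Theory.
Local Open Scope ring_scope.
Local Open Scope classical_set_scope.

(* N is a norm on R^n; the metric is d(x,y) = N (x - y). *)
Definition is_norm (R : realType) (n : nat) (N : 'rV[R]_n -> R) : Prop :=
  [/\ forall x, N x = 0 -> x = 0,
      forall (a : R) x, N (a *: x) = `|a| * N x
    & forall x y, N (x + y) <= N x + N y].

Definition cell (R : realType) (n : nat) (delta : R) (m : 'rV[int]_n)
  : set 'rV[R]_n :=
  [set x | forall j : 'I_n,
     ((m ord0 j)%:~R - 2^-1) * delta <= x ord0 j /\
     x ord0 j < ((m ord0 j)%:~R + 2^-1) * delta].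

Definition grid (R : realType) (n : nat) (delta : R) : set 'rV[R]_n :=
  [set x | exists m : 'rV[int]_n, x = delta *: map_mx (fun z : int => z%:~R) m].

(* The delta-roundoff of x: delta m where x in C_delta(m);
   m_j = floor (x_j / delta + 1/2) is that (unique) m. *)
Definition roundoff (R : realType) (n : nat) (delta : R) (x : 'rV[R]_n)
  : 'rV[R]_n :=
  \row_j (delta * (Num.floor (x ord0 j / delta + 2^-1))%:~R).

Definition roundoff_map (R : realType) (n : nat) (delta : R)
  (w : 'rV[R]_n -> 'rV[R]_n) : 'rV[R]_n -> 'rV[R]_n :=
  fun x => roundoff delta (w x).

Definition theta (R : realType) (n : nat) (N : 'rV[R]_n -> R) (delta : R) : R :=
  2^-1 * sup [set r | exists (x y : 'rV[R]_n),
     [/\ cell delta (0 : 'rV[int]_n) x, cell delta (0 : 'rV[int]_n) y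
        & r = N (x - y)]].

Definition absorbing (R : realType) (n : nat) (D Lam : set 'rV[R]_n)
  (f : 'rV[R]_n -> 'rV[R]_n) : Prop :=
  forall x, D x -> exists K : nat, forall i : nat, (K <= i)%N -> Lam (iter i f x).

(* Main.v *)
Require Import Defs.
From mathcomp Require Import all_boot all_order all_algebra.
From mathcomp Require Import all_classical all_reals.
From mathcomp Require Import topology normedtype derive ring lra zify.
Import Order.TTheory GRing.Theory Num.Theory.
Import numFieldNormedType.Exports.
Local Open Scope ring_scope.
Local Open Scope classical_set_scope.

Section S.
Variables (R : realType) (n : nat) (N : 'rV[R]_n -> R).
Hypothesis HN : is_norm N.

Lemma N0 : N 0 = 0.
Proof. case: HN => _ HZ _. by rewrite -(scale0r (0 : 'rV[R]_n)) HZ normr0 mul0r. Qed.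

Lemma NN x : N (- x) = N x.
Proof. case: HN => _ HZ _. by rewrite -scaleN1r HZ normrN normr1 mul1r. Qed.

Lemma N_ge0 x : 0 <= N x.
Proof.
case: HN => _ HZ HD. have := HD x (- x). rewrite subrr N0 NN.
move=> h; lra.
Qed.

Lemma ND x y : N (x + y) <= N x + N y.
Proof. by case: HN. Qed.

Lemma NZ a x : N (a *: x) = `|a| * N x.
Proof. by case: HN. Qed.

Lemma le_bigmaxr (I : finType) (F : I -> R) k : F k <= \big[Num.max/0]_i F i.
Proof.
have : k \in index_enum I by rewrite mem_index_enum.
elim: (index_enum I) => //= a r IH.
rewrite big_cons in_cons => /orP[/eqP<-|/IH h]; rewrite le_max ?lexx //.
by rewrite h orbT.
Qed.

Lemma coord_le (x : 'rV[R]_n) j : `|x ord0 j| <= `|x|.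
Proof.
rewrite [`|x|]/Num.norm /= mx_normrE.
have := (le_bigmaxr _ (fun ij : 'I_1 * 'I_n => `|x ij.1 ij.2|) (ord0, j)). move=> h. exact h.
Qed.

Lemma norm_le_coord (x : 'rV[R]_n) m : 0 <= m -> (forall j, `|x ord0 j| <= m) -> `|x| <= m.
Proof.
move=> m0 H; rewrite [`|x|]/Num.norm /= mx_normrE.
elim/big_ind: _ => //.
  by move=> a b ha hb; rewrite ge_max ha hb.
by move=> [i j] _; rewrite (ord1 i); exact: H.
Qed.


Definition BN := \sum_(j < n) N (delta_mx 0 j).

Lemma N_sum (I : finType) (F : I -> 'rV[R]_n) : N (\sum_i F i) <= \sum_i N (F i).
Proof.
elim/big_rec2: _ => [|i y1 y2 _ h]; first by rewrite N0.
by apply: le_trans (ND _ _) _; rewrite lerD2l.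
Qed.

Lemma N_upper x : N x <= BN * `|x|.
Proof.
rewrite {1}(row_sum_delta x) /BN mulr_suml.
apply: le_trans (N_sum _ _) _; apply: ler_sum => j _.
by rewrite NZ mulrC ler_wpM2l ?N_ge0 // coord_le.
Qed.

Lemma BN_ge0 : 0 <= BN.
Proof. by apply: sumr_ge0 => j _; exact: N_ge0. Qed.

Lemma N_lip x y : `|N x - N y| <= N (x - y).
Proof.
have h1 : N x <= N y + N (x - y).
  have e1 : x = y + (x - y) by rewrite addrC subrK.
  by rewrite {1}e1 ND.
have h2 : N y <= N x + N (x - y).
  have e1 : y = x + (y - x) by rewrite addrC subrK.
  by rewrite {1}e1 -(NN (x - y)) opprB ND.
rewrite ler_norml; apply/andP; split; lra.
Qed.

Lemma N_cont : continuous N.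
Proof.
move=> x; apply/(@cvgrPdist_le _ _ _ _ (nbhs_filter x)) => e e0.
have hB := BN_ge0.
have B1 : 0 < BN + 1 by lra.
have d0 : 0 < e / (BN + 1) by rewrite divr_gt0.
apply/(@nbhs_normP R [the pseudoMetricNormedZmodType R of 'rV[R]_n]); exists (e / (BN + 1)) => // y /= /ltW hxy.
apply: le_trans (N_lip _ _) _.
apply: le_trans (N_upper _) _.
move: hxy; rewrite ler_pdivlMr // => hxy.
apply: le_trans hxy; have := normr_ge0 (x - y); nra.
Qed.

Lemma N_lower : exists2 c, 0 < c & forall x, c * `|x| <= N x.
Proof.
pose S := [set x : 'rV[R]_n | `|x| = 1].
have key : forall x : 'rV[R]_n, x != 0 -> S (`|x|^-1 *: x).
  move=> x x0; rewrite /S /= normrZ normfV normr_id mulVf //.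
  by rewrite normr_eq0.
have [S0|S0] := pselect (S !=set0); last first.
  exists 1 => // x; have [->|x0] := eqVneq x 0.
    by rewrite normr0 mulr0 N0.
  by exfalso; apply: S0; exists (`|x|^-1 *: x); exact: key.
have cS : compact S.
  apply: bounded_closed_compact.
    exists 1; split; first exact: num_real.
    by move=> m m1 x /= ->; exact: ltW.
  apply: (@preimage_closed _ _ (@Num.norm _ [the pseudoMetricNormedZmodType R of 'rV[R]_n]) [set y | y = 1]).
    by move=> y _; exact: norm_continuous.
  exact: closed_eq.
have [c0 c0S minc] := EVT_min_rV S0 cS (@continuous_subspaceT _ _ S N N_cont).
move: c0S; rewrite inE /S /= => c01.
have Nc0 : 0 < N c0.
  rewrite lt_def N_ge0 andbT; apply/eqP => h; have {}h : c0 = 0 by case: HN => H0 _ _; exact: H0.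
  by move: c01; rewrite h normr0 => /eqP; rewrite eq_sym oner_eq0.
exists (N c0) => // x; have [->|x0] := eqVneq x 0.
  by rewrite normr0 mulr0 N0.
have := minc _ (mem_set (key x x0)); rewrite NZ normfV normr_id.
have xp : 0 < `|x| by rewrite normr_gt0.
by rewrite ler_pdivlMl // mulrC.
Qed.

Variables (delta : R).
Hypothesis Hd : 0 < delta.

Lemma round_grid (x : 'rV[R]_n) : grid delta (roundoff delta x).
Proof.
exists (\row_j Num.floor (x ord0 j / delta + 2^-1)).
by apply/rowP => j; rewrite !mxE.
Qed.

Lemma aux_round (f t d : R) : f <= t -> t < f + 1 -> 0 < d ->
  - (2^-1 * d) <= (t - 2^-1) * d - d * f < 2^-1 * d.
Proof.
move=> h1 h2 hd.
have k1 : 0 <= d * (t - f) by apply: mulr_ge0; [exact: ltW | rewrite subr_ge0].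
have k2 : 0 < d * (f + 1 - t) by apply: mulr_gt0; rewrite // subr_gt0.
apply/andP; split; lra.
Qed.

Lemma round_coord (x : 'rV[R]_n) j :
  - (2^-1 * delta) <= x ord0 j - roundoff delta x ord0 j < 2^-1 * delta.
Proof.
rewrite /roundoff mxE.
set t := x ord0 j / delta + 2^-1.
have h1 := floor_le t; have h2 := floorD1_gt t; rewrite intrD in h2.
have ex : x ord0 j = (t - 2^-1) * delta by rewrite /t addrK divfK // gt_eqF.
rewrite ex; exact: aux_round.
Qed.

Let E := [set r | exists (x y : 'rV[R]_n),
     [/\ cell delta (0 : 'rV[int]_n) x, cell delta (0 : 'rV[int]_n) y
        & r = N (x - y)]].

Lemma cell0P (x : 'rV[R]_n) : cell delta (0 : 'rV[int]_n) x <->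
  forall j, - (2^-1 * delta) <= x ord0 j /\ x ord0 j < 2^-1 * delta.
Proof.
by rewrite /cell; split => H j; have := H j; rewrite mxE /= mulr0z sub0r add0r mulNr.
Qed.

Lemma E_sup : has_sup E.
Proof.
split.
  exists 0, 0, 0; split; rewrite ?subrr ?N0 //; apply/cell0P => j; rewrite mxE;
  by have := Hd; split; lra.
exists (BN * delta) => r [x [y [cx cy ->]]].
apply: le_trans (N_upper _) _; apply: ler_wpM2l; first exact: BN_ge0.
apply: norm_le_coord; first exact: ltW.
move=> j; move/cell0P: cx => /(_ j) [h1 h2]; move/cell0P: cy => /(_ j) [h3 h4].
rewrite !mxE ler_norml; apply/andP; split; lra.
Qed.

Lemma half_lemma (a M : R) : 0 <= a ->
  (forall s, 0 < s -> s < 1 -> (1 + s) * a <= M) -> a <= 2^-1 * M.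
Proof.
move=> a0 H; rewrite leNgt; apply/negP => hlt.
have h2 : (0:R) < 2^-1 by lra.
have h3 : (2^-1:R) < 1 by lra.
have hM := H _ h2 h3.
have ha : 0 < a by lra.
have hM0 : 0 < M by lra.
pose s := M / (2 * a).
have sa : s * a = 2^-1 * M by rewrite /s; field; rewrite gt_eqF.
have s0 : 0 < s by rewrite /s divr_gt0 // mulr_gt0.
have s1 : s < 1 by nra.
have := H s s0 s1; nra.
Qed.


Lemma sub_coord (x y : 'rV[R]_n) j : (x - y) ord0 j = x ord0 j - y ord0 j.
Proof. by rewrite !mxE. Qed.

Lemma aux_s (s v d : R) : 0 < s -> s < 1 -> 0 < d -> - (2^-1 * d) <= v -> v < 2^-1 * d ->
  - (2^-1 * d) <= - (s * v) /\ - (s * v) < 2^-1 * d.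
Proof. move=> *; split; nra. Qed.

Lemma round_err (x : 'rV[R]_n) : N (x - roundoff delta x) <= theta N delta.
Proof.
set u := x - roundoff delta x.
have cu : forall j, - (2^-1 * delta) <= u ord0 j /\ u ord0 j < 2^-1 * delta.
  move=> j; rewrite /u sub_coord; have /andP[] := round_coord x j; by split.
clearbody u.
rewrite /theta; apply: half_lemma; first exact: N_ge0.
move=> s s0 s1; apply: (sup_upper_bound E_sup).
exists u, (- (s *: u)); split.
- exact/cell0P.
- apply/cell0P => j; rewrite !mxE; have [h1 h2] := cu j; exact: aux_s.
- have -> : u - - (s *: u) = (1 + s) *: u.
    by rewrite scalerDl scale1r opprK.
  by rewrite NZ ger0_norm //; lra.
Qed.

Lemma grid_coord (y : 'rV[R]_n) j : grid delta y ->
  y ord0 j = delta * (Num.floor (y ord0 j / delta))%:~R.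
Proof.
by move=> [m ->]; rewrite !mxE mulrAC divff ?gt_eqF // mul1r intrKfloor.
Qed.

Lemma grid_coord' (y : 'rV[R]_n) j : grid delta y ->
  (Num.floor (y ord0 j / delta))%:~R = y ord0 j / delta.
Proof.
move=> g; by rewrite [in RHS](grid_coord y j g) mulrAC divff ?gt_eqF // mul1r.
Qed.

Lemma int_bound (z : int) (C : nat) (K : R) : `|(z%:~R : R)| <= K -> K < C%:R ->
  (absz (z + C%:Z)%R <= 2 * C)%N /\ (0 <= z + C%:Z).
Proof.
move=> h1 h2; have := le_lt_trans h1 h2; rewrite ltr_norml => /andP[a b].
have a' : (- (C%:Z)) < z by rewrite -(ltr_int R) rmorphN.
have b' : z < C%:Z by rewrite -(ltr_int R).
split; lia.
Qed.

Lemma pigeon (B : R) (y : nat -> 'rV[R]_n) :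
  (forall k, grid delta (y k)) -> (forall k, N (y k) <= B) ->
  exists i j, (i < j)%N /\ y i = y j.
Proof.
move=> gy Ny.
have [c c0 hc] := N_lower.
have hB : forall k j, `|y k ord0 j| <= B / c.
  move=> k j; apply: le_trans (coord_le _ _) _.
  rewrite ler_pdivlMr // mulrC; exact: le_trans (hc _) (Ny k).
pose C := (Num.trunc (B / c / delta)).+1.
have hC : B / c / delta < C%:R by exact: truncnS_gt.
pose z k j := Num.floor (y k ord0 j / delta).
have hz : forall k j, (absz (z k j + C%:Z)%R <= 2 * C)%N /\ (0 <= z k j + C%:Z).
  move=> k j; apply: (@int_bound _ C (B / c / delta) _ hC).
  rewrite /z (grid_coord' (y k) j (gy k)) normrM normfV (gtr0_norm Hd).
  by rewrite ler_pM2r ?invr_gt0 // hB.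
pose K := (2 * C).+1.
pose enc k : 'rV['I_K]_n := \row_j (inord (absz (z k j + C%:Z)) : 'I_K).
have enc_inj : forall i j, enc i = enc j -> y i = y j.
  move=> i j e; apply/rowP => j0.
  have := congr1 (fun M : 'rV['I_K]_n => M ord0 j0) e; rewrite /enc !mxE => /(congr1 val) /=.
  have [a1 p1] := hz i j0; have [a2 p2] := hz j j0.
  rewrite !inordK ?ltnS // => habs.
  have hzz : z i j0 = z j j0.
    have : (z i j0 + C%:Z) = (z j j0 + C%:Z).
      by rewrite -(gez0_abs p1) -(gez0_abs p2) habs.
    by move/addIr.
  rewrite (grid_coord (y i) j0 (gy i)) (grid_coord (y j) j0 (gy j)).
  by move: hzz; rewrite /z => ->.
have [H|H] := pselect (exists i j, (i < j)%N /\ y i = y j); first exact: H.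
exfalso.
pose g (i : 'I_(#|{: 'rV['I_K]_n}|.+1)) := enc i.
have ginj : injective g.
  move=> i j /enc_inj e; apply: val_inj => /=.
  case: (ltngtP i j) => // h; exfalso; apply: H.
    by exists i, j.
  by exists j, i.
by have := leq_card g ginj; rewrite card_ord ltnn.
Qed.
End S.


Theorem theorem5 (R : realType) (n : nat) (N : 'rV[R]_n -> R)
  (delta lambda : R) (w : 'rV[R]_n -> 'rV[R]_n) (xf : 'rV[R]_n) :
  is_norm N -> 0 < delta ->
  0 <= lambda -> lambda < 1 ->
  (forall x y, N (w x - w y) <= lambda * N (x - y)) ->
  w xf = xf ->
  let Lam := [set y | grid delta y /\
                 N (y - xf) <= theta N delta / (1 - lambda)] in
  absorbing (grid delta) Lam (roundoff_map delta w) /\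
  roundoff_map delta w @` Lam `<=` Lam.
Proof.
move=> HN Hd l0 l1 Hw Hfix Lam.
set T := roundoff_map delta w.
set th := theta N delta.
set r0 := th / (1 - lambda).
have hr : th = r0 * (1 - lambda) by rewrite /r0 divfK // subr_eq0 gt_eqF.
have step : forall y, N (T y - xf) <= th + lambda * N (y - xf).
  move=> y.
  have e : T y - xf = (T y - w y) + (w y - w xf) by rewrite Hfix addrA subrK.
  rewrite e; apply: le_trans (@ND _ _ _ HN _ _) _; apply: lerD.
    by rewrite -(@NN _ _ _ HN) opprB; exact: (@round_err _ _ _ HN _ Hd).
  exact: Hw.
have inv : forall y, N (y - xf) <= r0 -> N (T y - xf) <= r0.
  move=> y hy; apply: le_trans (step y) _.
  have := ler_wpM2l l0 hy; rewrite hr; lra.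
split; last first.
  by move=> _ [y [gy hy] <-]; split; [exact: round_grid | exact: inv].
move=> x0 gx0.
have gi : forall k, grid delta (iter k T x0).
  by case=> [|k] //=; exact: round_grid.
pose a k := N (iter k T x0 - xf).
have [[K hK]|H] := pselect (exists K, a K <= r0).
  exists K => i Ki; split; first exact: gi.
  rewrite -(subnKC Ki); elim: (i - K)%N => [|m IH]; first by rewrite addn0.
  by rewrite addnS /=; exact: inv.
exfalso.
have gt : forall k, r0 < a k by move=> k; rewrite ltNge; apply/negP => h; apply: H; exists k.
have dec : forall k, a k.+1 < a k.
  move=> k; apply: le_lt_trans (step _) _.
  have := gt k; rewrite /a hr => h.
  have : 0 < (1 - lambda) * (N (iter k T x0 - xf) - r0).
    by apply: mulr_gt0; rewrite subr_gt0.
  lra.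
have strict : forall i j, (i < j)%N -> a j < a i.
  move=> i; elim=> [//|j IH]; rewrite ltnS leq_eqVlt => /orP[/eqP <-|h].
    exact: dec.
  exact: lt_trans (dec j) (IH h).
have bnd : forall k, a k <= a 0%N.
  by case=> [//|k]; apply/ltW/strict.
have Ny : forall k, N (iter k T x0) <= a 0%N + N xf.
  move=> k; have e : iter k T x0 = (iter k T x0 - xf) + xf by rewrite subrK.
  rewrite e; apply: le_trans (@ND _ _ _ HN _ _) _; rewrite lerD2r; exact: bnd.
have [i [j [ij e]]] := @pigeon _ _ _ HN _ Hd _ _ gi Ny.
by have := strict _ _ ij; rewrite /a e ltxx.
Qed.
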